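(* Let $n\ge1$, $\lambda>0$, $\alpha>0$, and $\mu_1,\dots,\mu_n,\mu^*_1,\dots,\mu^*_n\in\mathbb{R}$. Let $X_1,\dots,X_n$ be independent with $X_i\sim\mathrm{Fr\acute{e}}(\mu_i,\lambda,\alpha)$ and $X^*_1,\dots,X^*_n$ be independent with $X^*_i\sim\mathrm{Fr\acute{e}}(\mu^*_i,\lambda,\alpha)$. If $\sum_{i=j}^{n}\mu^*_{(i)}\le\sum_{i=j}^{n}\mu_{(i)}$ for all $j=1,\dots,n$, then $X_{n:n}\ge_{\rm rh}X^*_{n:n}$.
   Context: $X\sim \mathrm{Fr\acute{e}}(\mu,\lambda,\alpha)$ means $X$ has distribution function $\exp\{-((x-\mu)/\lambda)^{-\alpha}\}$ for $x>\mu$. $X_{n:n}=\max(X_1,\dots,X_n)$. For a vector $\boldsymbol{x}$, $x_{(1)}\le\dots\le x_{(n)}$ are its components in increasing order. For random variables $X,Y$ with distribution functions $F,G$ and densities, $X\le_{\rm rh}Y$ means $F'(x)/F(x)\le G'(x)/G(x)$ for all $x$ (reversed hazard rate order). *)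

(* Defs.v *)
From HB Require Import structures.
From mathcomp Require Import all_boot all_order all_algebra.
From mathcomp Require Import all_classical all_reals all_analysis.
Set Implicit Arguments. Unset Strict Implicit. Unset Printing Implicit Defensive.
Import Order.TTheory GRing.Theory Num.Theory.
Import numFieldNormedType.Exports.
Local Open Scope classical_set_scope.
Local Open Scope ring_scope.

Definition frechet_cdf {R : realType} (mu lam alpha : R) (x : R) : R :=
  if mu < x then expR (- (((x - mu) / lam) `^ (- alpha))) else 0.

Definition distfun {d} {T : measurableType d} {R : realType}
  (P : probability T R) (X : T -> R) (x : R) : R :=
  fine (P (X @^-1` `]-oo, x])).

Definition mutually_independent {d} {T : measurableType d} {R : realType}
  (P : probability T R) (n : nat) (X : 'I_n -> T -> R) : Prop :=
  forall B : 'I_n -> set R, (forall i, measurable (B i)) ->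
    P (\big[setI/setT]_(i < n) (X i @^-1` B i))
    = (\prod_(i < n) P (X i @^-1` B i))%E.

Definition max_rv {T : Type} {R : realType} (n : nat) (X : 'I_n -> T -> R)
  (w : T) : R :=
  let s := [seq X i w | i <- enum 'I_n] in \big[Num.max/head 0 s]_(x <- s) x.

(* x_{(1)} <= ... <= x_{(n)} : the components sorted increasingly
   (0-based: (osort x)`_(i-1) = x_{(i)}). *)
Definition osort {R : realType} (n : nat) (x : 'I_n -> R) : seq R :=
  sort <=%R [seq x i | i <- enum 'I_n].

(* Reversed hazard rate order X <=_rh Y, with F, G the cdfs of X, Y:
   F'(x)/F(x) <= G'(x)/G(x) for all x, where a ratio with vanishing
   denominator is read as +infinity (the usual convention; it amounts to
   requiring G'/G >= F'/F wherever G>0, and that F>0 wherever G>0). *)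
Definition rh_le {R : realType} (F G : R -> R) : Prop :=
  forall x, 0 < G x -> 0 < F x /\ derive1 F x / F x <= derive1 G x / G x.

(* Main.v *)
Require Import Defs.
From HB Require Import structures.
From mathcomp Require Import all_boot all_order all_algebra.
From mathcomp Require Import all_classical all_reals all_analysis.
From mathcomp Require Import ring lra.
Import Order.TTheory GRing.Theory Num.Theory.
Import numFieldNormedType.Exports.
Local Open Scope classical_set_scope.
Local Open Scope ring_scope.


Definition hf {R : realType} (lam alpha x m : R) : R :=
  alpha / lam * ((x - m) / lam) `^ (- alpha - 1).

Lemma bigmax_le_iff (R : realType) (s : seq R) (h x : R) :
  (\big[Num.max/h]_(y <- s) y <= x) = (h <= x) && all (fun y => y <= x) s.
Proof.
elim: s => [|a s IH]; first by rewrite big_nil andbT.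
by rewrite big_cons ge_max IH /= andbCA.
Qed.

Lemma bigI_mem (T : Type) (I : eqType) (s : seq I) (F : I -> set T) (w : T) :
  (\big[setI/setT]_(i <- s) F i) w <-> (forall i, i \in s -> F i w).
Proof.
elim: s => [|a s IH]; first by rewrite big_nil; split.
rewrite big_cons; split.
- by move=> [Fa /IH H] i; rewrite inE => /orP[/eqP->|/H].
- move=> H; split; first by apply: H; rewrite inE eqxx.
  by apply/IH => i Hi; apply: H; rewrite inE Hi orbT.
Qed.

Lemma max_rv_le {T : Type} {R : realType} {n : nat} (X : 'I_n -> T -> R) w x :
  (0 < n)%N -> (max_rv X w <= x) <-> (forall i, X i w <= x).
Proof.
case: n X => // n X _; rewrite /max_rv bigmax_le_iff; split.
- move=> /andP[_ /allP H] i; apply: H; apply/mapP; exists i => //.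
  by rewrite mem_enum.
- move=> H; apply/andP; split.
    by rewrite enum_ordSl /=; apply: H.
  by apply/allP => y /mapP[i _ ->].
Qed.

Lemma distfun_max d (T : measurableType d) (R : realType) (P : probability T R)
  (n : nat) (X : 'I_n -> T -> R) (x : R) :
  (0 < n)%N -> mutually_independent P X ->
  (forall i, measurable_fun setT (X i)) ->
  distfun P (max_rv X) x = \prod_(i < n) distfun P (X i) x.
Proof.
move=> n0 ind mX; rewrite /distfun.
have -> : max_rv X @^-1` `]-oo, x] = \big[setI/setT]_(i < n) (X i @^-1` `]-oo, x]).
  apply/seteqP; split => w /=.
  - rewrite /= in_itv /= => /(max_rv_le _ _ _ n0) H.
    apply/bigI_mem => i _ /=; rewrite in_itv /=; exact: H.
  - move/bigI_mem => H; rewrite /= in_itv /=; apply/(max_rv_le _ _ _ n0) => i.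
    have := H i; rewrite /= in_itv /=; apply.
    exact: mem_index_enum.
rewrite ind; last by move=> i; exact: measurable_itv.
have Pfin : forall i, P (X i @^-1` `]-oo, x]) = (fine (P (X i @^-1` `]-oo, x])))%:E.
  move=> i; rewrite fineK //; apply: fin_num_measure => //.
  rewrite -[X in measurable X]setTI; apply: mX => //; exact: measurable_itv.
under eq_bigr do rewrite Pfin.
by rewrite prodEFin.
Qed.



Lemma is_derive_lin (R : realType) (m lam x : R) :
  is_derive x 1 (fun y : R => (y - m) / lam) lam^-1.
Proof.
have Hb : is_derive x (1:R) (fun y : R => y - m) (1:R).
  by have := is_deriveB (is_derive_id x (1:R)) (is_derive_cst m x (1:R)); rewrite subr0.
have H := @is_deriveM R R^o (fun y : R => y - m) (cst lam^-1) x 1 1 0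
  Hb (is_derive_cst _ _ _).
move: H; rewrite scaler0 add0r /=; have -> : (lam^-1%:A : R^o) = lam^-1 by rewrite /GRing.scale /= mulr1. by [].
Qed.

Lemma is_derive_h (R : realType) (m lam alpha x : R) : 0 < lam -> m < x ->
  is_derive x 1 (fun y : R => - (((y - m) / lam) `^ (- alpha))) (hf lam alpha x m).
Proof.
move=> lam0 mx.
have u0 : 0 < (x - m) / lam by rewrite divr_gt0 // subr_gt0.
have H1 := is_derive1_comp (f := fun u : R => u `^ (- alpha)) (g := fun y : R => (y - m) / lam)
   (is_derive1_powR (- alpha) u0) (is_derive_lin R m lam x).
have H2 := is_deriveN H1.
move: H2; rewrite /hf.
have -> : (- (- alpha * ((x - m) / lam) `^ (- alpha - 1) / lam)) =
   alpha / lam * ((x - m) / lam) `^ (- alpha - 1) by rewrite !mulNr opprK mulrAC.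
by [].
Qed.

Lemma frechet_ratio (R : realType) (n : nat) (lam alpha x : R) (m : 'I_n -> R) :
  0 < lam -> (forall i, m i < x) ->
  0 < \prod_(i < n) frechet_cdf (m i) lam alpha x /\
  derive1 (fun y => \prod_(i < n) frechet_cdf (m i) lam alpha y) x /
     (\prod_(i < n) frechet_cdf (m i) lam alpha x)
   = \sum_(i < n) hf lam alpha x (m i).
Proof.
move=> lam0 mx.
pose h := fun i : 'I_n => fun y : R => - (((y - m i) / lam) `^ (- alpha)).
pose G := \sum_(i < n) h i.
have GE : forall y, G y = \sum_(i < n) h i y by move=> y; rewrite /G fct_sumE.
have FE : forall y, (forall i, m i < y) ->
    \prod_(i < n) frechet_cdf (m i) lam alpha y = expR (G y).
  by move=> y my; rewrite GE expR_sum; apply: eq_bigr => i _; rewrite /frechet_cdf my.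
have Fx := FE x mx.
have dG : is_derive x 1 G (\sum_(i < n) hf lam alpha x (m i)).
  rewrite /G; apply: (@is_derive_sum _ R^o R^o) => i; exact: is_derive_h.
have dE := is_derive1_comp (is_derive_expR (G x)) dG.
have nearE : \forall y \near x,
    (expR \o G) y = \prod_(i < n) frechet_cdf (m i) lam alpha y.
  have : \forall y \near x, forall i, m i < y.
    exact: filter_forall (fun i => lt_nbhsr (mx i)).
  by apply: filterS => y my /=; rewrite FE.
have dF := near_eq_is_derive nearE dE.
split; first by rewrite Fx expR_gt0.
rewrite derive1E (@derive_val _ _ _ _ _ _ _ dF) Fx mulrAC divff ?mul1r //.
by rewrite gt_eqF // expR_gt0.
Qed.


Lemma abel_nonneg (R : realFieldType) (n : nat) (d e : nat -> R) :
  (forall i, (i < n)%N -> 0 <= d i) ->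
  (forall i, (i.+1 < n)%N -> d i <= d i.+1) ->
  (forall j, (j < n)%N -> 0 <= \sum_(j <= i < n) e i) ->
  0 <= \sum_(0 <= i < n) d i * e i.
Proof.
move=> d0 dmon E0.
have key : forall k j, (j + k.+1)%N = n ->
    d j * \sum_(j <= i < n) e i <= \sum_(j <= i < n) d i * e i.
  elim => [|k IH] j.
    by rewrite addn1 => <-; rewrite !big_nat1.
  move=> Hn.
  have jn : (j < n)%N by rewrite -Hn addnS ltnS leq_addr.
  have IH2 := IH j.+1 ltac:(by rewrite addSnnS).
  have jn1 : (j.+1 < n)%N by rewrite -Hn addnS ltnS addnS ltnS leq_addr.
  rewrite [in X in X <= _](big_ltn jn) [in X in _ <= X](big_ltn jn) mulrDr lerD2l.
  apply: le_trans IH2; apply: ler_wpM2r; first exact: E0.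
  exact: dmon.
case: n d0 dmon E0 key => [|n] d0 dmon E0 key; first by rewrite big_geq.
apply: le_trans (key n 0%N (add0n _)).
by apply: mulr_ge0; [apply: d0|apply: E0].
Qed.
Lemma powR_tangent (R : realType) (beta t s : R) : 0 < beta -> 0 < t -> 0 < s ->
  t `^ (- beta) + beta * t `^ (- beta - 1) * (t - s) <= s `^ (- beta).
Proof.
move=> b0 t0 s0.
set r := s / t.
have r0 : 0 < r by rewrite /r divr_gt0.
have sE : s = t * r by rewrite /r mulrC divfK // gt_eqF.
rewrite [in X in _ <= X]sE (powRM _ (ltW t0) (ltW r0)).
have Hr : 1 + beta * (1 - r) <= r `^ (- beta).
  rewrite /powR gt_eqF //; apply: le_trans (expR_ge1Dx _); rewrite lerD2l.
  have := @le_ln1Dx R (r - 1) ltac:(rewrite ltrBrDr addrC subrr //).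
  rewrite addrC subrK => Hl.
  nra.
have tE : t `^ (- beta - 1) = t `^ (- beta) / t.
  by rewrite powRB ?(powRr1 (ltW t0)) //; apply/implyP => _; rewrite gt_eqF.
rewrite tE.
have T0 : 0 < t `^ (- beta) by apply: powR_gt0.
have -> : t `^ (- beta) + beta * (t `^ (- beta) / t) * (t - s) =
   t `^ (- beta) * (1 + beta * (1 - r)).
  rewrite /r; field; by rewrite gt_eqF.
by apply: ler_wpM2l; [apply: ltW|].
Qed.


Definition Dh {R : realType} (lam alpha x m : R) : R :=
  alpha / lam * (alpha + 1) * ((x - m) / lam) `^ (- alpha - 1 - 1) / lam.

Lemma hf_tangent (R : realType) (lam alpha x a b : R) :
  0 < lam -> 0 < alpha -> a < x -> b < x ->
  hf lam alpha x a + Dh lam alpha x a * (b - a) <= hf lam alpha x b.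
Proof.
move=> l0 a0 ax bx.
have t0 : 0 < (x - a) / lam by rewrite divr_gt0 // subr_gt0.
have s0 : 0 < (x - b) / lam by rewrite divr_gt0 // subr_gt0.
have b0 : 0 < alpha + 1 by rewrite addr_gt0.
have H := powR_tangent _ _ _ _ b0 t0 s0.
have E : - alpha - 1 = - (alpha + 1) by rewrite opprD.
rewrite /hf /Dh !E.
have c0 : 0 <= alpha / lam by rewrite divr_ge0 // ltW.
set T := ((x - a) / lam) `^ (- (alpha + 1)).
set P := ((x - a) / lam) `^ (- (alpha + 1) - 1).
set S := ((x - b) / lam) `^ (- (alpha + 1)).
have -> : alpha / lam * T + alpha / lam * (alpha + 1) * P / lam * (b - a) =
  alpha / lam * (T + (alpha + 1) * P * ((x - a) / lam - (x - b) / lam)).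
  by field; rewrite gt_eqF.
exact: ler_wpM2l.
Qed.

Lemma Dh_ge0 (R : realType) (lam alpha x a : R) :
  0 < lam -> 0 < alpha -> 0 <= Dh lam alpha x a.
Proof.
move=> l0 a0; rewrite /Dh; apply: divr_ge0; last exact: ltW.
apply: mulr_ge0; last exact: powR_ge0.
apply: mulr_ge0; first by rewrite divr_ge0 // ltW.
by rewrite addr_ge0 // ltW.
Qed.

Lemma Dh_mono (R : realType) (lam alpha x a a' : R) :
  0 < lam -> 0 < alpha -> a <= a' -> a' < x ->
  Dh lam alpha x a <= Dh lam alpha x a'.
Proof.
move=> l0 a0 aa ax.
have t0 : 0 < (x - a') / lam by rewrite divr_gt0 // subr_gt0.
have t1 : (x - a') / lam <= (x - a) / lam.
  by rewrite ler_pM2r ?invr_gt0 // lerD2l lerN2.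
have t0' : 0 < (x - a) / lam by apply: lt_le_trans t1.
rewrite /Dh; apply: ler_wpM2r; first by rewrite invr_ge0 ltW.
apply: ler_wpM2l.
  apply: mulr_ge0; first by rewrite divr_ge0 // ltW.
  by rewrite addr_ge0 // ltW.
have -> : - alpha - 1 - 1 = - (alpha + 1 + 1) by rewrite !opprD.
have g0 : 0 <= alpha + 1 + 1 by rewrite !addr_ge0 // ltW.
rewrite !powRN lef_pV2 ?posrE ?powR_gt0 //.
by apply: ge0_ler_powR => //; rewrite nnegrE ltW.
Qed.

Lemma osort_size {R : realType} {n : nat} (m : 'I_n -> R) : size (osort m) = n.
Proof. by rewrite /osort size_sort size_map size_enum_ord. Qed.

Lemma osort_sorted {R : realType} {n : nat} (m : 'I_n -> R) : sorted <=%R (osort m).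
Proof. exact: sort_sorted le_total _. Qed.

Lemma sum_osort {R : realType} {n : nat} (m : 'I_n -> R) (f : R -> R) :
  \sum_(i < n) f (m i) = \sum_(0 <= i < n) f (osort m)`_i.
Proof.
have -> : \sum_(0 <= i < n) f (osort m)`_i =
    \sum_(0 <= i < size (osort m)) f (osort m)`_i by rewrite osort_size.
rewrite -(big_nth 0 predT f) /osort.
rewrite (perm_big _ (permEl (perm_sort _ _))) big_map big_enum /=.
by apply: eq_bigl.
Qed.

Lemma osort_mono {R : realType} {n : nat} (m : 'I_n -> R) i j :
  (i <= j)%N -> (j < n)%N -> (osort m)`_i <= (osort m)`_j.
Proof.
move=> ij jn.
apply: (sorted_leq_nth le_trans lexx 0 (osort_sorted m)) => //=.
  by rewrite inE osort_size; exact: leq_ltn_trans jn.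
by rewrite inE osort_size.
Qed.

Lemma osort_mem {R : realType} {n : nat} (m : 'I_n -> R) k :
  (k < n)%N -> exists i, (osort m)`_k = m i.
Proof.
move=> kn; have : (osort m)`_k \in osort m by rewrite mem_nth // osort_size.
by rewrite mem_sort => /mapP[i _ ->]; exists i.
Qed.

Lemma osort_ge {R : realType} {n : nat} (m : 'I_n -> R) i : m i <= (osort m)`_n.-1.
Proof.
have : m i \in osort m by rewrite mem_sort; apply: map_f; rewrite mem_enum.
move=> Hi; have := nth_index 0 Hi; move=> <-.
have kn : (index (m i) (osort m) < n)%N by have := index_mem (m i) (osort m); rewrite osort_size Hi.
have n0 : (0 < n)%N := leq_ltn_trans (leq0n _) kn.
by apply: osort_mono; [rewrite -ltnS prednK | rewrite ltn_predL].
Qed.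

Lemma major (R : realType) (n : nat) (lam alpha x : R) (mu mus : 'I_n -> R) :
  0 < lam -> 0 < alpha -> (forall i, mu i < x) -> (forall i, mus i < x) ->
  (forall j : nat, (j < n)%N ->
     \sum_(j <= i < n) (osort mus)`_i <= \sum_(j <= i < n) (osort mu)`_i) ->
  \sum_(i < n) hf lam alpha x (mus i) <= \sum_(i < n) hf lam alpha x (mu i).
Proof.
move=> l0 a0 mux musx Hmaj.
rewrite !(sum_osort _ (hf lam alpha x)) -subr_ge0 -sumrB.
have ax : forall k, (k < n)%N -> (osort mus)`_k < x.
  by move=> k kn; have [i ->] := osort_mem mus k kn.
have bx : forall k, (k < n)%N -> (osort mu)`_k < x.
  by move=> k kn; have [i ->] := osort_mem mu k kn.
set a := osort mus; set b := osort mu.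
apply: le_trans (@abel_nonneg R n (fun i => Dh lam alpha x a`_i)
   (fun i => b`_i - a`_i) _ _ _) _.
- by move=> i _; apply: Dh_ge0.
- move=> i iS; apply: Dh_mono => //; last exact: ax.
  exact: osort_mono.
- by move=> j jn; rewrite sumrB subr_ge0; apply: Hmaj.
- apply: ler_sum_nat => i /andP[_ ilt].
  by rewrite lerBrDl; apply: hf_tangent => //; [apply: ax|apply: bx].
Qed.

Theorem mainTheorem2 (R : realType) (n : nat) (lam alpha : R)
  (mu mus : 'I_n -> R)
  (d1 : measure_display) (T1 : measurableType d1) (P1 : probability T1 R)
  (X : 'I_n -> T1 -> R)
  (d2 : measure_display) (T2 : measurableType d2) (P2 : probability T2 R)
  (Xs : 'I_n -> T2 -> R) :
  (0 < n)%N -> 0 < lam -> 0 < alpha ->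
  (forall i, measurable_fun setT (X i)) ->
  (forall i, measurable_fun setT (Xs i)) ->
  mutually_independent P1 X ->
  mutually_independent P2 Xs ->
  (forall i x, distfun P1 (X i) x = frechet_cdf (mu i) lam alpha x) ->
  (forall i x, distfun P2 (Xs i) x = frechet_cdf (mus i) lam alpha x) ->
  (forall j : nat, (j < n)%N ->
     \sum_(j <= i < n) (osort mus)`_i <= \sum_(j <= i < n) (osort mu)`_i) ->
  rh_le (distfun P2 (max_rv Xs)) (distfun P1 (max_rv X)).
Proof.
move=> n0 l0 a0 mX mXs iX iXs dX dXs Hmaj.
have E1 : distfun P1 (max_rv X) = fun y => \prod_(i < n) frechet_cdf (mu i) lam alpha y.
  apply: funext => y; rewrite distfun_max //.
  by apply: eq_bigr => i _; rewrite dX.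
have E2 : distfun P2 (max_rv Xs) = fun y => \prod_(i < n) frechet_cdf (mus i) lam alpha y.
  apply: funext => y; rewrite distfun_max //.
  by apply: eq_bigr => i _; rewrite dXs.
rewrite E1 E2 => x Fpos.
have mux : forall i, mu i < x.
  move=> i; case: ltP => // Hi; move: Fpos; rewrite (bigD1 i) //= /frechet_cdf.
  have -> : (mu i < x) = false by apply/negbTE; rewrite -leNgt.
  by rewrite mul0r ltxx.
have musx : forall i, mus i < x.
  move=> i; apply: le_lt_trans (osort_ge mus i) _.
  have nn : (n.-1 < n)%N by rewrite ltn_predL.
  have := Hmaj _ nn; rewrite (big_ltn (F := fun i => (osort mus)`_i) nn).
  rewrite (big_ltn (F := fun i => (osort mu)`_i) nn) prednK // !big_geq // !addr0 => H.
  apply: le_lt_trans H _.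
  by have [k ->] := osort_mem mu _ nn.
have [p1 r1] := frechet_ratio R n lam alpha x mu l0 mux.
have [p2 r2] := frechet_ratio R n lam alpha x mus l0 musx.
have Hm := major R n lam alpha x mu mus l0 a0 mux musx Hmaj.
rewrite -r1 -r2 in Hm.
split; first exact: p2.
exact: Hm.
Qed.
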